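(* In the setting of the context, assume every irreducible $T$-module is thin, and let $\mathbf{C}\in T$ be the unique element satisfying $\mathbf{A}+\frac{q\mathbf{B}\mathbf{C}-q^{-1}\mathbf{C}\mathbf{B}}{q^2-q^{-2}}=\frac{(\mathbf{a}+\mathbf{a}^{-1})(\Lambda+\Lambda^{-1})+(\mathbf{b}+\mathbf{b}^{-1})(\mathbf{c}+\mathbf{c}^{-1})}{q+q^{-1}}$, $\mathbf{B}+\frac{q\mathbf{C}\mathbf{A}-q^{-1}\mathbf{A}\mathbf{C}}{q^2-q^{-2}}=\frac{(\mathbf{b}+\mathbf{b}^{-1})(\Lambda+\Lambda^{-1})+(\mathbf{c}+\mathbf{c}^{-1})(\mathbf{a}+\mathbf{a}^{-1})}{q+q^{-1}}$ and $\mathbf{C}+\frac{q\mathbf{A}\mathbf{B}-q^{-1}\mathbf{B}\mathbf{A}}{q^2-q^{-2}}=\frac{(\mathbf{c}+\mathbf{c}^{-1})(\Lambda+\Lambda^{-1})+(\mathbf{a}+\mathbf{a}^{-1})(\mathbf{b}+\mathbf{b}^{-1})}{q+q^{-1}}$. Then the standard module $V=\mathbb{C}^X$ becomes a $\Delta_q$-module on which the generators $\mathcal{A},\mathcal{B},\mathcal{C}$ act as $\mathbf{A},\mathbf{B},\mathbf{C}$ respectively.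
   Context: The universal Askey–Wilson algebra $\Delta_q$ is the associative unital $\mathbb{C}$-algebra with generators $\mathcal{A},\mathcal{B},\mathcal{C}$ and relations asserting that each of $\mathcal{A}+\frac{q\mathcal{B}\mathcal{C}-q^{-1}\mathcal{C}\mathcal{B}}{q^2-q^{-2}}$, $\mathcal{B}+\frac{q\mathcal{C}\mathcal{A}-q^{-1}\mathcal{A}\mathcal{C}}{q^2-q^{-2}}$, $\mathcal{C}+\frac{q\mathcal{A}\mathcal{B}-q^{-1}\mathcal{B}\mathcal{A}}{q^2-q^{-2}}$ is central. Fix a nonzero $q\in\mathbb{C}$ with $q^4\neq1$. Let $\Gamma$ be a finite connected distance-regular graph (undirected, no loops or multiple edges) with vertex set $X$, distance $\partial$, diameter $D\ge3$; $V=\mathbb{C}^X$. $A$ is the adjacency matrix, $E_0,\dots,E_D$ the primitive idempotents of the Bose–Mesner algebra with $E_0=|X|^{-1}J$ and $E_1,\dots,E_D$ a $Q$-polynomial ordering; $A=\sum\theta_iE_i$. Fix a vertex $x$; $E_i^*$ is the diagonal $0/1$ matrix projecting onto vertices at distance $i$ from $x$; $A^*$ is diagonal with $(y,y)$-entry $|X|(E_1)_{xy}$, $A^*=\sum\theta_i^*E_i^*$; $T$ is the algebra generated by $A,A^*$. Assume $q$-Racah type: $\theta_i=w+uq^{2i-D}+vq^{D-2i}$, $\theta_i^*=w^*+u^*q^{2i-D}+v^*q^{D-2i}$, $u,u^*,v,v^*\neq0$; fix $a,b$ with $a^2=u/v$, $b^2=u^*/v^*$; $\mathbf{A}=(A-wI)/(av)$,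 $\mathbf{B}=(A^*-w^*I)/(bv^* )$. For an irreducible $T$-module $W\subseteq V$: endpoint $\rho=\min\{i:E_i^*W\ne0\}$, dual endpoint $\tau=\min\{i:E_iW\neq0\}$, diameter $d=|\{i:E^*_iW\ne0\}|-1$; thin means $\dim E^*_iW\le1$ for all $i$. Put $a(W)=aq^{2\tau+d-D}$, $b(W)=bq^{2\rho+d-D}$. If $W$ is thin, $(\mathbf{A}|_W,\{E_{\tau+i}|_W\}_{i=0}^d,\mathbf{B}|_W,\{E^*_{\rho+i}|_W\}_{i=0}^d)$ is a Leonard system with eigenvalues $\vartheta_i=a(W)q^{2i-d}+a(W)^{-1}q^{d-2i}$ and dual eigenvalues $\vartheta^*_i=b(W)q^{2i-d}+b(W)^{-1}q^{d-2i}$; let $\kappa=0$ if $d=0$ and, for $d\ge1$, $\kappa=a(W)b(W)^{-1}q^{d-1}+a(W)^{-1}b(W)q^{1-d}+\phi_1/((q-q^{-1})(q^d-q^{-d}))$ where $\phi_1=(\vartheta^*_0-\vartheta^*_1)(\mathrm{trace}(E^*_\rho\mathbf{A}|_W)-\vartheta_d)$; $c(W)$ is a root of $\xi^2-\kappa\xi+1=0$ (defined up to reciprocal). Isomorphism of irreducible modules: linear bijection commuting with $T$; $\Psi$ = set of types; for $\psi\in\Psi$, $a(\psi),b(\psi),d(\psi),c(\psi)$ are $a(W),b(W)$, the diameter, and (a fixed choice of) $c(W)$ for $W$ of type $\psi$. $V_\psi$ = span of irreducible modules of type $\psi$, $V=\bigoplus_\psi V_\psi$, $e_\psi$ = identity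 on $V_\psi$, $0$ on other $V_\lambda$. Define $\mathbf{a}=\sum_\psi a(\psi)e_\psi$, $\mathbf{b}=\sum_\psi b(\psi)e_\psi$, $\mathbf{c}=\sum_\psi c(\psi)e_\psi$, $\Lambda=\sum_\psi q^{d(\psi)+1}e_\psi$ (these are invertible). *)

(* Defs.v *)
(* Complex numbers are modelled as R[i] = complex R for an
   arbitrary real closed field R (R = the reals gives C). *)
From HB Require Import structures.
From mathcomp Require Import all_boot all_order all_algebra.

Set Implicit Arguments. Unset Strict Implicit. Unset Printing Implicit Defensive.
Import Order.TTheory GRing.Theory Num.Theory.
Local Open Scope ring_scope.

Section Graph.
Variables (n : nat) (e : rel 'I_n).

Fixpoint ball (k : nat) (x : 'I_n) : {set 'I_n} :=
  match k with
  | 0 => [set x]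
  | k'.+1 => ball k' x :|: [set y | [exists z in ball k' x, e z y]]
  end.

(* path-length distance: the least k with y in ball k x
   (for a connected graph on n vertices this is < n) *)
Definition dist (x y : 'I_n) : nat :=
  find (fun k => y \in ball k x) (iota 0 n).

Definition simple_graph : Prop := symmetric e /\ irreflexive e.

Definition connected_graph : Prop := forall x y, connect e x y.

Definition distance_regular : Prop :=
  exists p : nat -> nat -> nat -> nat, forall (h i j : nat) (x y : 'I_n),
    dist x y = h ->
    #|[set z | (dist x z == i) && (dist y z == j)]| = p h i j.

Definition has_diameter (D : nat) : Prop :=
  (forall x y, (dist x y <= D)%N) /\ (exists x y, dist x y = D).

End Graph.

(* Vectors of V = F^X are row vectors; a matrix M acts on V by          *)
(* v |-> v *m M^T (i.e. the usual action M v on column vectors).        *)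
(* A subspace W of V is represented by a square matrix whose row space  *)
(* is W.                                                                *)
Section Matrices.
Variables (F : fieldType) (n : nat) (e : rel 'I_n).

Definition adjmx : 'M[F]_n := \matrix_(y, z) (e y z)%:R.

Definition distmx (i : nat) : 'M[F]_n := \matrix_(y, z) (dist e y z == i)%:R.

Definition hadamard (P Q : 'M[F]_n) : 'M[F]_n := \matrix_(y, z) (P y z * Q y z).

Definition in_BM (D : nat) (M : 'M[F]_n) : Prop :=
  exists c : nat -> F, M = \sum_(k < D.+1) c k *: distmx k.

(* E_0..E_D are the primitive idempotents of M: nonzero pairwise
   orthogonal idempotents of M summing to the identity (M has dimension
   D+1, so these are exactly the primitive idempotents) *)
Definition BM_primitive_idempotents (D : nat) (E : nat -> 'M[F]_n) : Prop :=
  [/\ forall i, (i <= D)%N -> in_BM D (E i),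
      forall i j, (i <= D)%N -> (j <= D)%N ->
        E i *m E j = (if i == j then E i else 0),
      forall i, (i <= D)%N -> E i != 0
    & \sum_(i < D.+1) E i = 1%:M].

(* Q-polynomial ordering, via the Krein parameters q^h_{ij} defined by
   E_i o E_j = |X|^{-1} sum_h q^h_{ij} E_h :  q^h_{ij} = 0 when one of
   h,i,j exceeds the sum of the other two, and q^h_{ij} <> 0 when one of
   them equals the sum of the other two. *)
Definition Q_polynomial (D : nat) (E : nat -> 'M[F]_n) : Prop :=
  forall i j, (i <= D)%N -> (j <= D)%N ->
  exists qc : nat -> F,
    hadamard (E i) (E j) = n%:R^-1 *: \sum_(h < D.+1) qc h *: E h /\
    forall h, (h <= D)%N ->
      ((i + j < h)%N || (h + i < j)%N || (h + j < i)%N -> qc h = 0) /\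
      ((h == i + j) || (i == h + j) || (j == h + i) -> qc h != 0).

Definition Estar (x : 'I_n) (i : nat) : 'M[F]_n :=
  diag_mx (\row_y (dist e x y == i)%:R).

Definition Astar (x : 'I_n) (E : nat -> 'M[F]_n) : 'M[F]_n :=
  diag_mx (\row_y (n%:R * E 1%N x y)).

Inductive gen_alg (S : seq 'M[F]_n) : 'M[F]_n -> Prop :=
  | gen_alg_gen M : M \in S -> gen_alg S M
  | gen_alg_one : gen_alg S 1%:M
  | gen_alg_add M N : gen_alg S M -> gen_alg S N -> gen_alg S (M + N)
  | gen_alg_scale (c : F) M : gen_alg S M -> gen_alg S (c *: M)
  | gen_alg_mul M N : gen_alg S M -> gen_alg S N -> gen_alg S (M *m N).

Definition Talg (x : 'I_n) (E : nat -> 'M[F]_n) : 'M[F]_n -> Prop :=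
  gen_alg [:: adjmx; Astar x E].

Section Modules.
Variable inT : 'M[F]_n -> Prop.

Definition is_module (W : 'M[F]_n) : Prop :=
  forall M, inT M -> (W *m M^T <= W)%MS.

Definition irreducible_module (W : 'M[F]_n) : Prop :=
  [/\ W != 0, is_module W &
      forall U : 'M[F]_n, (U <= W)%MS -> is_module U -> U = 0 \/ (W <= U)%MS].

(* isomorphism of modules: a linear bijection W -> W' (induced by some
   P : V -> V) commuting with the action of T *)
Definition iso_modules (W W' : 'M[F]_n) : Prop :=
  exists P : 'M[F]_n,
    [/\ (W *m P == W')%MS, \rank (W *m P) = \rank W &
        forall M, inT M -> W *m M^T *m P = W *m P *m M^T].
End Modules.

Definition acts_as_scalar (W M : 'M[F]_n) (c : F) : Prop :=
  W *m M^T = c *: W.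

Definition restr_trace (W M : 'M[F]_n) : F :=
  \tr (row_base W *m M^T *m pinvmx (row_base W)).

Section Params.
Variables (x : 'I_n) (E : nat -> 'M[F]_n) (D : nat).

Definition nz_sub (W M : 'M[F]_n) : bool := W *m M^T != 0.

Definition endpoint (W : 'M[F]_n) : nat :=
  find (fun i => nz_sub W (Estar x i)) (iota 0 D.+1).
Definition dual_endpoint (W : 'M[F]_n) : nat :=
  find (fun i => nz_sub W (E i)) (iota 0 D.+1).
Definition mod_diameter (W : 'M[F]_n) : nat :=
  (count (fun i => nz_sub W (Estar x i)) (iota 0 D.+1)).-1.

Definition thin (W : 'M[F]_n) : Prop :=
  forall i, (\rank (W *m (Estar x i)^T) <= 1)%N.

Variables (q a b : F) (Abold : 'M[F]_n).

Definition zd (m k : nat) : int := Posz m - Posz k.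

Definition aW (W : 'M[F]_n) : F :=
  a * q ^ zd (2 * dual_endpoint W + mod_diameter W) D.
Definition bW (W : 'M[F]_n) : F :=
  b * q ^ zd (2 * endpoint W + mod_diameter W) D.

Definition thW (W : 'M[F]_n) (i : nat) : F :=
  aW W * q ^ zd (2 * i) (mod_diameter W)
  + (aW W)^-1 * q ^ zd (mod_diameter W) (2 * i).
Definition thsW (W : 'M[F]_n) (i : nat) : F :=
  bW W * q ^ zd (2 * i) (mod_diameter W)
  + (bW W)^-1 * q ^ zd (mod_diameter W) (2 * i).

Definition phi1W (W : 'M[F]_n) : F :=
  (thsW W 0 - thsW W 1) *
  (restr_trace W (Estar x (endpoint W) *m Abold) - thW W (mod_diameter W)).

Definition kappaW (W : 'M[F]_n) : F :=
  let d := mod_diameter W in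
  if d == 0%N then 0 else
    aW W / bW W * q ^+ d.-1 + bW W / aW W * q ^- d.-1
    + phi1W W / ((q - q^-1) * (q ^+ d - q ^- d)).

Definition is_abold (ab : 'M[F]_n) : Prop :=
  forall W, irreducible_module (Talg x E) W -> acts_as_scalar W ab (aW W).
Definition is_bbold (bb : 'M[F]_n) : Prop :=
  forall W, irreducible_module (Talg x E) W -> acts_as_scalar W bb (bW W).
Definition is_Lambda (L : 'M[F]_n) : Prop :=
  forall W, irreducible_module (Talg x E) W ->
    acts_as_scalar W L (q ^+ (mod_diameter W).+1).
Definition is_cbold (cb : 'M[F]_n) : Prop :=
  exists cf : 'M[F]_n -> F,
    (forall W W', irreducible_module (Talg x E) W ->
       irreducible_module (Talg x E) W' -> iso_modules (Talg x E) W W' ->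
       cf W = cf W') /\
    (forall W, irreducible_module (Talg x E) W ->
       cf W ^+ 2 - kappaW W * cf W + 1 = 0 /\ acts_as_scalar W cb (cf W)).
End Params.

Definition Abold (w a v : F) : 'M[F]_n := (a * v)^-1 *: (adjmx - w *: 1%:M).
Definition Bbold (x : 'I_n) (E : nat -> 'M[F]_n) (ws b vs : F) : 'M[F]_n :=
  (b * vs)^-1 *: (Astar x E - ws *: 1%:M).

End Matrices.

Definition aw_expr (F : fieldType) (n : nat) (q : F) (X Y Z : 'M[F]_n) :=
  X + (q ^+ 2 - q ^- 2)^-1 *: (q *: (Y *m Z) - q^-1 *: (Z *m Y)).

Definition commute_mx (F : fieldType) (n : nat) (P Q : 'M[F]_n) : Prop :=
  P *m Q = Q *m P.

(* V is a Delta_q-module with generators acting as A, B, C: the images of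
   the three (central) Askey-Wilson elements commute with A, B and C,
   i.e. they are central in the image of Delta_q. *)
Definition Deltaq_module (F : fieldType) (n : nat) (q : F) (A B C : 'M[F]_n) : Prop :=
  forall O, O \in [:: aw_expr q A B C; aw_expr q B C A; aw_expr q C A B] ->
  [/\ commute_mx O A, commute_mx O B & commute_mx O C].

Definition plus_inv (F : fieldType) (n : nat) (U : 'M[F]_n) : 'M[F]_n :=
  U + invmx U.

Arguments adjmx {F n} e.
Arguments distmx {F n} e i.

(* Main.v *)
Require Import Defs.
From HB Require Import structures.
From mathcomp Require Import all_boot all_order all_algebra.
From mathcomp Require Import complex.
From mathcomp Require Import zify.
From Stdlib Require Import Classical.
Import Order.TTheory GRing.Theory Num.Theory.
Local Open Scope ring_scope.
Section Gen.
Variables (C : numClosedFieldType) (n : nat).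
Implicit Types (W U M G K : 'M[C]_n).

Definition orth W : 'M[C]_n := orthomx Num.Def.conjC (hermitian1mx n) W.

Lemma gen_alg_sub (S S' : seq 'M[C]_n) M :
  {subset S <= S'} -> gen_alg S M -> gen_alg S' M.
Proof.
move=> sS; elim=> {M} [M /sS|||c M _ IH|M N _ IH1 _ IH2].
- exact: gen_alg_gen.
- exact: gen_alg_one.
- by move=> M N _ IH1 _ IH2; apply: gen_alg_add.
- exact: gen_alg_scale.
- exact: gen_alg_mul.
Qed.

Lemma stable_gen (S : seq 'M[C]_n) W :
  (forall G, G \in S -> (W *m G^T <= W)%MS) -> is_module (gen_alg S) W.
Proof.
move=> HS M; elim=> {M} [M /HS //||M N _ IH1 _ IH2|c M _ IH|M N _ IH1 _ IH2].
- by rewrite trmx1 mulmx1.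
- by rewrite linearD /= mulmxDr addmx_sub // ?IH1 ?IH2.
- by rewrite linearZ /= -scalemxAr scalemx_sub.
- by rewrite trmx_mul mulmxA (submx_trans (submxMr _ IH2)).
Qed.

Lemma module_cap (T : 'M[C]_n -> Prop) U V :
  is_module T U -> is_module T V -> is_module T (U :&: V)%MS.
Proof.
move=> hU hV M TM; rewrite sub_capmx.
by rewrite (submx_trans (submxMr _ (capmxSl _ _)) (hU M TM))
           (submx_trans (submxMr _ (capmxSr _ _)) (hV M TM)).
Qed.

Lemma orth_stable W G :
  (W *m map_mx Num.Def.conjC G <= W)%MS -> (orth W *m G^T <= orth W)%MS.
Proof.
case/submxP=> Y hY; rewrite /orth orthomx1E.
have h0 : orth W *m map_mx Num.Def.conjC (W^T) = 0.
  by apply/eqP; rewrite -orthomx1E.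
rewrite -mulmxA.
have -> : G^T *m map_mx Num.Def.conjC (W^T) = map_mx Num.Def.conjC ((W *m map_mx Num.Def.conjC G)^T).
  rewrite trmx_mul map_mxM; congr (_ *m _).
  by apply/matrixP=> i j; rewrite !mxE; exact: (esym (conjCK _)).
by rewrite hY trmx_mul map_mxM mulmxA h0 mul0mx.
Qed.


Lemma exists_irr (T : 'M[C]_n -> Prop) U : is_module T U -> U != 0 ->
  exists W, irreducible_module T W /\ (W <= U)%MS.
Proof.
have [k] := ubnP (\rank U); elim: k U => // k IH U ltU mU nzU.
case: (classic (irreducible_module T U)) => [irr|nirr]; first by exists U.
have : exists U1, [/\ (U1 <= U)%MS, is_module T U1, U1 != 0 & ~~ (U <= U1)%MS].
  apply: NNPP => hne; apply: nirr; split=> // U1 sU1 mU1.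
  case: (eqVneq U1 0) => [->|nz]; [by left|right].
  apply: NNPP => nsub; apply: hne; exists U1; split=> //; exact/negP.
case=> U1 [sU1 mU1 nz1 nsub].
have lt1 : (\rank U1 < \rank U)%N.
  by rewrite ltn_neqAle mxrankS // andbT; have [_ ->] := mxrank_leqif_sup sU1.
have [W [iW sW]] := IH U1 (leq_trans lt1 (ltnSE ltU)) mU1 nz1.
by exists W; split=> //; apply: submx_trans sW sU1.
Qed.

Lemma key (S : seq 'M[C]_n)
  (Hadj : forall G, G \in S -> (map_mx Num.Def.conjC G)^T \in S)
  (M : 'M[C]_n)
  (hM : forall W, irreducible_module (gen_alg S) W -> exists c, acts_as_scalar W M c)
  G : gen_alg S G -> G *m M = M *m G.
Proof.
move=> SG.
set K := G^T *m M^T - M^T *m G^T.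
suff h : forall U, is_module (gen_alg S) U -> (U <= kermx K)%MS.
  have : (1%:M <= kermx K)%MS by apply: h => M' _; rewrite submx1.
  move/sub_kermxP; rewrite mul1mx => /eqP; rewrite subr_eq0 => /eqP.
  by rewrite -!trmx_mul => /trmx_inj ->.
move=> U; have [k] := ubnP (\rank U); elim: k U => // k IH U ltU mU.
have [->|nzU] := eqVneq U 0; first by rewrite sub0mx.
have [W [iW sWU]] := @exists_irr (gen_alg S) U mU nzU.
have [nzW mW _] := iW.
have PW : (W <= kermx K)%MS.
  have [c hc] := hM W iW.
  apply/sub_kermxP; have /submxP [X hX] := mW G SG.
  by rewrite /K mulmxBr !mulmxA hX -(mulmxA X) hc -scalemxAr -scalemxAl -hX subrr.
have mO : is_module (gen_alg S) (orth W).
  apply: stable_gen => G' SG'; apply: orth_stable.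
  by have := mW _ (gen_alg_gen (Hadj G' SG')); rewrite trmxK.
set U' := (U :&: orth W)%MS.
have mU' : is_module (gen_alg S) U' by apply: module_cap.
have hcap0 : (W :&: orth W = 0)%MS by apply: orthomx_ortho_disj.
have sU'U : (U' <= U)%MS by apply: capmxSl.
have ltU' : (\rank U' < \rank U)%N.
  rewrite ltn_neqAle mxrankS // andbT; have [_ ->] := mxrank_leqif_sup sU'U.
  apply/negP => sUU'; move/negP: nzW; apply.
  rewrite -submx0 -hcap0 sub_capmx submx_refl /=.
  exact: submx_trans sWU (submx_trans sUU' (capmxSr _ _)).
have PU' := IH U' (leq_trans ltU' (ltnSE ltU)) mU'.
have sWU' : ((W + U') <= U)%MS by rewrite addsmx_sub sWU sU'U.
have r0 : \rank (W :&: U')%MS = 0%N.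
  apply/eqP; rewrite -leqn0 -(mxrank0 C n n) -hcap0 mxrankS //.
  by rewrite capmxS // capmxSr.
have r1 := mxrank_sum_cap W U'.
have r2 := mxrank_sum_cap U (orth W).
have r3 : \rank (orth W) = (n - \rank W)%N by apply: rank_ortho.
have r4 := rank_leq_col (U + orth W)%MS.
have r5 := rank_leq_col W.
have hU : (U <= W + U')%MS.
  have [_ <-] := mxrank_leqif_sup sWU'.
  rewrite eqn_leq mxrankS //=.
  rewrite -/U' in r2. lia.
by apply: submx_trans hU _; rewrite addsmx_sub PW PU'.
Qed.

End Gen.
Lemma interp (K : fieldType) (s : seq K) (f : K -> K) :
  exists p : {poly K}, forall t, t \in s -> p.[t] = f t.
Proof.
elim: s => [|t s [p hp]]; first by exists 0.
case: (boolP (t \in s)) => ts.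
  by exists p => u; rewrite inE => /predU1P [->|/hp //]; exact: hp.
set r := \prod_(u <- s) ('X - u%:P).
have rt : r.[t] != 0.
  rewrite horner_prod prodf_seq_neq0; apply/allP => u us /=.
  by rewrite hornerXsubC subr_eq0; apply: contraNneq ts => ->.
exists (p + ((f t - p.[t]) / r.[t]) *: r) => u; rewrite inE => /predU1P [->|us].
  by rewrite hornerD hornerZ divfK // addrC subrK.
have ru : r.[u] = 0.
  by rewrite horner_prod (big_rem u us) /= hornerXsubC subrr mul0r.
by rewrite hornerD hornerZ ru mulr0 addr0; exact: hp.
Qed.

Lemma diag_stable (C : fieldType) n (W : 'M[C]_n) (d : 'rV[C]_n) (f : C -> C) :
  (W *m diag_mx d <= W)%MS -> (W *m diag_mx (map_mx f d) <= W)%MS.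
Proof.
move=> hd; have [p hp] := @interp C [seq d 0 i | i <- enum 'I_n] f.
have -> : map_mx f d = map_mx (horner p) d.
  apply/rowP => i; rewrite !mxE hp //; apply/mapP; exists i; rewrite ?mem_enum ?inE //.
elim/poly_ind: p {hp} => [|p c IH].
  have -> : diag_mx (map_mx (horner 0) d) = 0.
    by apply/matrixP => i j; rewrite !mxE horner0 mul0rn.
  by rewrite mulmx0 sub0mx.
have -> : diag_mx (map_mx (horner (p * 'X + c%:P)) d)
          = diag_mx (map_mx (horner p) d) *m diag_mx d + c%:M.
  apply/matrixP => i j; rewrite mul_diag_mx !mxE hornerMXaddC.
  by case: (i == j); rewrite ?mulr1n ?mulr0n ?mulr0 ?addr0.
rewrite mulmxDr addmx_sub // ?mulmxA.
  exact: submx_trans (submxMr _ IH) hd.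
by rewrite mul_mx_scalar scalemx_sub.
Qed.

Section Comm.
Variables (C : fieldType) (n : nat) (G : 'M[C]_n).
Definition cw (X : 'M[C]_n) := X *m G = G *m X.
Lemma cw_add X Y : cw X -> cw Y -> cw (X + Y).
Proof. by rewrite /cw => hX hY; rewrite mulmxDl mulmxDr hX hY. Qed.
Lemma cw_mul X Y : cw X -> cw Y -> cw (X *m Y).
Proof. by rewrite /cw => hX hY; rewrite -mulmxA hY !mulmxA hX. Qed.
Lemma cw_scale c X : cw X -> cw (c *: X).
Proof. by rewrite /cw => hX; rewrite -scalemxAl hX scalemxAr. Qed.
Lemma cw_inv X : cw X -> cw (invmx X).
Proof.
rewrite /cw => hX; case: (boolP (X \in unitmx)) => uX; last by rewrite invmx_out.
by rewrite -[RHS](mulKmx uX) (mulmxA X G) hX -(mulmxA G) mulmxV // mulmx1.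
Qed.
Lemma cw_plus_inv X : cw X -> cw (plus_inv X).
Proof. by move=> hX; rewrite /plus_inv; apply: cw_add => //; apply: cw_inv. Qed.
End Comm.
Arguments cw {C n}.

Theorem theorem5p15 (R : rcfType) (n : nat) (e : rel 'I_n) (D : nat)
    (E : nat -> 'M[R[i]]_n) (x : 'I_n)
    (q w u v ws us vs a b : R[i])
    (ab bb cb Lb Cb : 'M[R[i]]_n) :
  simple_graph e -> connected_graph e -> distance_regular e ->
  has_diameter e D -> (3 <= D)%N ->
  BM_primitive_idempotents e D E ->
  E 0%N = (n%:R)^-1 *: const_mx 1 ->
  Q_polynomial D E ->
  q != 0 -> q ^+ 4 != 1 ->
  u != 0 -> v != 0 -> us != 0 -> vs != 0 ->
  (* q-Racah type eigenvalues theta_i and dual eigenvalues theta*_i *)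
  adjmx e = \sum_(i < D.+1)
     (w + u * q ^ zd (2 * i) D + v * q ^ zd D (2 * i)) *: E i ->
  (forall y : 'I_n, n%:R * E 1%N x y =
     ws + us * q ^ zd (2 * dist e x y) D + vs * q ^ zd D (2 * dist e x y)) ->
  a ^+ 2 = u / v -> b ^+ 2 = us / vs ->
  (* every irreducible T-module is thin *)
  (forall W, irreducible_module (Talg e x E) W -> thin e x W) ->
  is_abold e x E D q a ab ->
  is_bbold e x E D q b bb ->
  is_cbold e x E D q a b (Abold e w a v) cb ->
  is_Lambda e x E D q Lb ->
  Talg e x E Cb ->
  aw_expr q (Abold e w a v) (Bbold x E ws b vs) Cb =
    (q + q^-1)^-1 *: (plus_inv ab *m plus_inv Lb + plus_inv bb *m plus_inv cb) ->
  aw_expr q (Bbold x E ws b vs) Cb (Abold e w a v) =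
    (q + q^-1)^-1 *: (plus_inv bb *m plus_inv Lb + plus_inv cb *m plus_inv ab) ->
  aw_expr q Cb (Abold e w a v) (Bbold x E ws b vs) =
    (q + q^-1)^-1 *: (plus_inv cb *m plus_inv Lb + plus_inv ab *m plus_inv bb) ->
  Deltaq_module q (Abold e w a v) (Bbold x E ws b vs) Cb.
Proof.
move=> [hsym _] _ _ _ _ _ _ _ _ _ _ _ _ _ _ _ _ _ _ habold hbbold [cf [_ hcf]] hL TC h1 h2 h3.
set Cx := R[i].
set d : 'rV[Cx]_n := \row_y (n%:R * E 1%N x y).
have AsE : Astar x E = diag_mx d by [].
set S := [:: adjmx e; Astar x E; map_mx Num.Def.conjC (Astar x E)].
have adjT : (adjmx e)^T = adjmx e :> 'M[Cx]_n.
  by apply/matrixP => i j; rewrite !mxE hsym.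
have adjC : map_mx Num.Def.conjC (adjmx e) = adjmx e :> 'M[Cx]_n.
  by apply/matrixP => i j; rewrite !mxE rmorph_nat.
have AsC : map_mx Num.Def.conjC (Astar x E) = diag_mx (map_mx Num.Def.conjC d).
  by rewrite AsE map_diag_mx.
have Hadj : forall G, G \in S -> (map_mx Num.Def.conjC G)^T \in S.
  move=> G; rewrite !inE => /or3P [] /eqP ->.
  - by rewrite adjC adjT eqxx.
  - by rewrite AsC AsE tr_diag_mx eqxx !orbT.
  - have -> : map_mx Num.Def.conjC (map_mx Num.Def.conjC (Astar x E)) = Astar x E.
      by apply/matrixP => i j; rewrite !mxE conjCK.
    by rewrite AsE tr_diag_mx eqxx orbT.
have subS : {subset [:: adjmx e; Astar x E] <= S}.
  by move=> G; rewrite !inE => /orP [] ->; rewrite ?orbT.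
have modE : forall W, is_module (Talg e x E) W -> is_module (gen_alg S) W.
  move=> W mW; apply: stable_gen => G; rewrite !inE => /or3P [] /eqP ->.
  - by apply: mW; apply: gen_alg_gen; rewrite inE eqxx.
  - by apply: mW; apply: gen_alg_gen; rewrite !inE eqxx orbT.
  - rewrite AsC tr_diag_mx; apply: diag_stable.
    have := mW (Astar x E) (gen_alg_gen _); rewrite AsE tr_diag_mx; apply.
    by rewrite !inE eqxx orbT.
have modE' : forall W, is_module (gen_alg S) W -> is_module (Talg e x E) W.
  by move=> W mW M TM; apply: mW; apply: gen_alg_sub subS TM.
have irrE : forall W, irreducible_module (gen_alg S) W ->
    irreducible_module (Talg e x E) W.
  move=> W [nzW mW minW]; split=> //; first exact: modE'.
  by move=> U sU mU; apply: minW => //; apply: modE.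
have TS : forall G, Talg e x E G -> gen_alg S G by move=> G; apply: gen_alg_sub.
have comm : forall M, (forall W, irreducible_module (Talg e x E) W ->
    exists c, acts_as_scalar W M c) ->
    forall G, Talg e x E G -> cw G M.
  move=> M hM G TG; rewrite /cw.
  apply/esym/(@key _ _ S Hadj M _ G (TS _ TG)).
  by move=> W /irrE; apply: hM.
have cab : forall G, Talg e x E G -> cw G ab.
  by apply: comm => W /habold h; eexists; exact: h.
have cbb : forall G, Talg e x E G -> cw G bb.
  by apply: comm => W /hbbold h; eexists; exact: h.
have cLb : forall G, Talg e x E G -> cw G Lb.
  by apply: comm => W /hL h; eexists; exact: h.
have ccb : forall G, Talg e x E G -> cw G cb.
  by apply: comm => W /hcf [_ h]; eexists; exact: h.
have TA : Talg e x E (Abold e w a v).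
  apply: gen_alg_scale; rewrite -scaleNr; apply: gen_alg_add.
    by apply: gen_alg_gen; rewrite inE eqxx.
  by apply: gen_alg_scale; apply: gen_alg_one.
have TB : Talg e x E (Bbold x E ws b vs).
  apply: gen_alg_scale; rewrite -scaleNr; apply: gen_alg_add.
    by apply: gen_alg_gen; rewrite !inE eqxx orbT.
  by apply: gen_alg_scale; apply: gen_alg_one.
have key3 : forall G, Talg e x E G -> forall X Y Z W : 'M[Cx]_n,
    cw G X -> cw G Y -> cw G Z -> cw G W ->
    cw G ((q + q^-1)^-1 *: (plus_inv X *m plus_inv Y + plus_inv Z *m plus_inv W)).
  move=> G _ X Y Z W hX hY hZ hW.
  by apply/cw_scale/cw_add; apply: cw_mul; apply: cw_plus_inv.
have fin : forall G, Talg e x E G -> [/\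
    cw G ((q + q^-1)^-1 *: (plus_inv ab *m plus_inv Lb + plus_inv bb *m plus_inv cb)),
    cw G ((q + q^-1)^-1 *: (plus_inv bb *m plus_inv Lb + plus_inv cb *m plus_inv ab)) &
    cw G ((q + q^-1)^-1 *: (plus_inv cb *m plus_inv Lb + plus_inv ab *m plus_inv bb))].
  move=> G TG; split.
  - exact: (key3 _ TG _ _ _ _ (cab _ TG) (cLb _ TG) (cbb _ TG) (ccb _ TG)).
  - exact: (key3 _ TG _ _ _ _ (cbb _ TG) (cLb _ TG) (ccb _ TG) (cab _ TG)).
  - exact: (key3 _ TG _ _ _ _ (ccb _ TG) (cLb _ TG) (cab _ TG) (cbb _ TG)).
have [fA1 fA2 fA3] := fin _ TA.
have [fB1 fB2 fB3] := fin _ TB.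
have [fC1 fC2 fC3] := fin _ TC.
move=> O hO.
have : [|| O == aw_expr q (Abold e w a v) (Bbold x E ws b vs) Cb,
       O == aw_expr q (Bbold x E ws b vs) Cb (Abold e w a v) |
       O == aw_expr q Cb (Abold e w a v) (Bbold x E ws b vs)].
  by move: hO; rewrite !inE.
case/or3P => /eqP ->; [rewrite h1|rewrite h2|rewrite h3]; rewrite /commute_mx.
- by split; [exact: fA1|exact: fB1|exact: fC1].
- by split; [exact: fA2|exact: fB2|exact: fC2].
- by split; [exact: fA3|exact: fB3|exact: fC3].
Qed.
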